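(* Let $C$ be a convex subcomplex of a CAT(0) cube complex $X$ of finite dimension $n$, and let $r$ be a nonnegative integer. Then the combinatorial convex hull of $\mathrm{N}_r(C)$ is contained in $\mathrm{N}_{nr}(C)$.
   Context: $\mathrm{N}_r(C)$ denotes the set of vertices of $X$ at combinatorial distance at most $r$ from $C$ (the combinatorial distance being the path metric on the 1-skeleton). The combinatorial convex hull of a set of vertices is the intersection of all halfspaces containing it. *)

(* Defs.v *)
(* A CAT(0) cube complex X is modelled by its 1-skeleton,
   which is a median graph (Chepoi / Roller / Gerasimov). *)
From Stdlib Require Import Arith.

Fixpoint walk {V : Type} (adj : V -> V -> Prop) (x y : V) (k : nat) : Prop :=
  match k with
  | 0 => x = y
  | S k' => exists z, adj x z /\ walk adj z y k'
  end.

Definition is_dist {V : Type} (adj : V -> V -> Prop) (x y : V) (k : nat) : Prop :=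
  walk adj x y k /\ forall m, m < k -> ~ walk adj x y m.

Definition interval {V : Type} (adj : V -> V -> Prop) (x y z : V) : Prop :=
  exists a b, is_dist adj x z a /\ is_dist adj z y b /\ is_dist adj x y (a + b).

Definition median_graph {V : Type} (adj : V -> V -> Prop) : Prop :=
  (forall x y, adj x y -> adj y x) /\
  (forall x, ~ adj x x) /\
  (forall x y, exists k, walk adj x y k) /\
  (forall x y z, exists m,
      (interval adj x y m /\ interval adj y z m /\ interval adj x z m) /\
      forall m', interval adj x y m' /\ interval adj y z m' /\ interval adj x z m' -> m' = m).

(* f is an (induced) k-cube: vertices indexed by {0,1}^k (functions nat -> bool
   considered on the coordinates i < k) *)
Definition is_cube {V : Type} (adj : V -> V -> Prop) (k : nat) (f : (nat -> bool) -> V) : Prop :=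
  (forall a b, (forall i, i < k -> a i = b i) -> f a = f b) /\
  (forall a b, f a = f b -> forall i, i < k -> a i = b i) /\
  (forall a b, adj (f a) (f b) <->
     exists i, i < k /\ a i <> b i /\ forall j, j < k -> j <> i -> a j = b j).

Definition cube_dim {V : Type} (adj : V -> V -> Prop) (n : nat) : Prop :=
  (exists f, is_cube adj n f) /\ (forall k f, is_cube adj k f -> k <= n).

(* (vertex set of a) convex subcomplex: combinatorially convex *)
Definition convex {V : Type} (adj : V -> V -> Prop) (C : V -> Prop) : Prop :=
  forall x y z, C x -> C y -> interval adj x y z -> C z.

(* combinatorial halfspace: the side containing u of the hyperplane dual to the edge uv *)
Definition halfspace {V : Type} (adj : V -> V -> Prop) (H : V -> Prop) : Prop :=
  exists u v, adj u v /\
    forall x, H x <-> exists a b, is_dist adj x u a /\ is_dist adj x v b /\ a < b.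

Definition comb_hull {V : Type} (adj : V -> V -> Prop) (S : V -> Prop) (x : V) : Prop :=
  forall H, halfspace adj H -> (forall y, S y -> H y) -> H x.

Definition nbhd {V : Type} (adj : V -> V -> Prop) (r : nat) (C : V -> Prop) (x : V) : Prop :=
  exists c, C c /\ exists k, k <= r /\ walk adj c x k.

(* Main.v *)
Require Import Defs.
From Stdlib Require Import Arith Lia Classical IndefiniteDescription.

Section MG.
Variable V : Type.
Variable adj : V -> V -> Prop.
Hypothesis HM : median_graph adj.

Lemma adj_sym : forall x y, adj x y -> adj y x.
Proof. destruct HM as [H _]; auto. Qed.
Lemma adj_irr : forall x, ~ adj x x.
Proof. destruct HM as [_ [H _]]; auto. Qed.
Lemma conn : forall x y, exists k, walk adj x y k.
Proof. destruct HM as [_ [_ [H _]]]; auto. Qed.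

Lemma walk_app : forall k1 k2 x y z, walk adj x y k1 -> walk adj y z k2 -> walk adj x z (k1+k2).
Proof.
  induction k1; simpl; intros k2 x y z H1 H2.
  - subst; auto.
  - destruct H1 as [w [Hw Hwk]]. exists w; split; eauto.
Qed.

Lemma walk_rev : forall k x y, walk adj x y k -> walk adj y x k.
Proof.
  induction k; intros x y H.
  - simpl in *; auto.
  - destruct H as [w [H1 H2]]. apply IHk in H2.
    replace (S k) with (k+1) by lia. apply walk_app with w; auto.
    simpl. exists x; split; [apply adj_sym; auto | reflexivity].
Qed.

Lemma dist_ex : forall x y, exists k, is_dist adj x y k.
Proof.
  intros x y. destruct (conn x y) as [k Hk]. revert Hk.
  induction k as [k IH] using (well_founded_induction lt_wf). intros Hk.
  destruct (classic (exists m, m < k /\ walk adj x y m)) as [[m [Hm Hw]]|Hn].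
  - apply (IH m Hm Hw).
  - exists k; split; auto. intros m Hm Hw; apply Hn; eauto.
Qed.

Definition d x y : nat := proj1_sig (constructive_indefinite_description _ (dist_ex x y)).

Lemma d_spec x y : is_dist adj x y (d x y).
Proof. unfold d; destruct (constructive_indefinite_description _ _); simpl; auto. Qed.
Lemma d_walk x y : walk adj x y (d x y).
Proof. apply d_spec. Qed.
Lemma d_min x y k : walk adj x y k -> d x y <= k.
Proof.
  destruct (d_spec x y) as [_ H]. intros Hw.
  destruct (le_lt_dec (d x y) k); auto. exfalso; eapply H; eauto.
Qed.
Lemma is_dist_d x y k : is_dist adj x y k -> k = d x y.
Proof.
  intros [Hw Hm]. pose proof (d_min _ _ _ Hw).
  destruct (le_lt_dec k (d x y)). lia. exfalso; eapply Hm; eauto. apply d_walk.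
Qed.
Lemma d_refl x : d x x = 0.
Proof. pose proof (d_min x x 0 eq_refl). lia. Qed.
Lemma d_eq0 x y : d x y = 0 -> x = y.
Proof. intros H. pose proof (d_walk x y) as W. rewrite H in W. exact W. Qed.
Lemma d_sym x y : d x y = d y x.
Proof.
  pose proof (d_min _ _ _ (walk_rev _ _ _ (d_walk x y))).
  pose proof (d_min _ _ _ (walk_rev _ _ _ (d_walk y x))). lia.
Qed.
Lemma d_tri x y z : d x z <= d x y + d y z.
Proof. apply d_min. apply walk_app with y; apply d_walk. Qed.
Lemma d_adj x y : adj x y -> d x y = 1.
Proof.
  intros H. assert (d x y <= 1).
  { apply d_min. simpl. exists y; split; auto. }
  destruct (d x y) eqn:E; [|lia].
  apply d_eq0 in E; subst; exfalso; eapply adj_irr; eauto.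
Qed.
Lemma d1_adj x y : d x y = 1 -> adj x y.
Proof.
  intros H. pose proof (d_walk x y) as W. rewrite H in W.
  destruct W as [z [Hz E]]. simpl in E; subst; auto.
Qed.
Lemma d_step x y k : d x y = S k -> exists z, adj x z /\ d z y = k.
Proof.
  intros H. pose proof (d_walk x y) as W. rewrite H in W.
  destruct W as [z [Hz W]]. exists z; split; auto.
  pose proof (d_min _ _ _ W). pose proof (d_tri x z y). rewrite (d_adj _ _ Hz) in H1. lia.
Qed.

Definition Ib a b z := d a z + d z b = d a b.

Lemma int_iff a b z : interval adj a b z <-> Ib a b z.
Proof.
  split.
  - intros [a' [b' [H1 [H2 H3]]]]. apply is_dist_d in H1. apply is_dist_d in H2.
    apply is_dist_d in H3. unfold Ib. lia.
  - intros H. exists (d a z), (d z b). split; [apply d_spec|split;[apply d_spec|]].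
    unfold Ib in H. rewrite H. apply d_spec.
Qed.

Lemma med_ex x y z : exists m, (Ib x y m /\ Ib y z m /\ Ib x z m) /\
  forall m', Ib x y m' -> Ib y z m' -> Ib x z m' -> m' = m.
Proof.
  destruct HM as [_ [_ [_ H]]]. destruct (H x y z) as [m [[H1 [H2 H3]] Hu]].
  exists m. split. repeat split; apply int_iff; auto.
  intros m' A B C. apply Hu. repeat split; apply int_iff; auto.
Qed.

Definition med x y z := proj1_sig (constructive_indefinite_description _ (med_ex x y z)).
Lemma med_spec x y z : Ib x y (med x y z) /\ Ib y z (med x y z) /\ Ib x z (med x y z).
Proof. unfold med; destruct (constructive_indefinite_description _ _) as [m [H H0]]; simpl; auto. Qed.
Lemma med_uniq x y z m : Ib x y m -> Ib y z m -> Ib x z m -> m = med x y z.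
Proof. unfold med; destruct (constructive_indefinite_description _ _) as [m0 [H0 H]]; simpl; auto. Qed.

Lemma bip a b y : adj a b -> d y a = S (d y b) \/ d y b = S (d y a).
Proof.
  intros Hab. pose proof (d_adj _ _ Hab) as E.
  destruct (med_spec a b y) as [H1 [H2 H3]]. revert H1 H2 H3. generalize (med a b y). intros m H1 H2 H3.
  unfold Ib in *. rewrite E in H1.
  destruct (d a m) eqn:E1.
  - apply d_eq0 in E1. rewrite <- E1 in H2. rewrite (d_sym b a), E in H2.
    rewrite (d_sym y a), (d_sym y b). lia.
  - assert (d m b = 0) by lia. apply d_eq0 in H. rewrite H in H3.
    rewrite (d_sym y a), (d_sym y b). lia.
Qed.

Lemma quad x x1 x2 y k : adj x x1 -> adj x x2 -> x1 <> x2 -> d x1 y = k -> d x2 y = k ->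
  d x y = S k -> exists w, adj x1 w /\ adj x2 w /\ S (d w y) = k.
Proof.
  intros A1 A2 N E1 E2 E.
  assert (D2 : d x1 x2 = 2).
  { pose proof (d_tri x1 x x2). rewrite (d_sym x1 x), (d_adj _ _ A1), (d_adj _ _ A2) in H.
    destruct (d x1 x2) as [|[|[|]]] eqn:F; try lia.
    - apply d_eq0 in F; congruence.
    - apply d1_adj in F. destruct (bip _ _ y F); rewrite (d_sym y x1), (d_sym y x2) in H0; lia. }
  destruct (med_spec x1 x2 y) as [H1 [H2 H3]]. revert H1 H2 H3. generalize (med x1 x2 y). intros m H1 H2 H3.
  unfold Ib in *. rewrite D2 in H1.
  assert (d x1 m = 0 \/ d x1 m = 1 \/ d x1 m = 2) as [F|[F|F]] by lia.
  - apply d_eq0 in F. rewrite <- F in H2. rewrite (d_sym x2 x1) in H2. lia.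
  - exists m. split; [apply d1_adj; auto|split; [apply d1_adj; rewrite d_sym; lia|lia]].
  - assert (d m x2 = 0) by lia. apply d_eq0 in H. rewrite H in H3. lia.
Qed.

Lemma dd2 a c c' : adj a c -> adj a c' -> c <> c' -> d c c' = 2.
Proof.
  intros A1 A2 N. pose proof (d_tri c a c'). rewrite (d_sym c a), (d_adj _ _ A1), (d_adj _ _ A2) in H.
  destruct (d c c') as [|[|[|]]] eqn:F; try lia.
  - apply d_eq0 in F; congruence.
  - apply d1_adj in F. destruct (bip _ _ a F); rewrite (d_adj _ _ A1), (d_adj _ _ A2) in H0; lia.
Qed.

Lemma k23 a b c1 c2 c3 : adj a c1 -> adj c1 b -> adj a c2 -> adj c2 b -> adj a c3 -> adj c3 b ->
  c1 <> c2 -> c1 <> c3 -> c2 <> c3 -> a <> b -> False.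
Proof.
  intros A1 B1 A2 B2 A3 B3 N12 N13 N23 Nab.
  assert (forall z, adj z c1 -> adj z c2 -> adj z c3 -> z = med c1 c2 c3).
  { intros z Z1 Z2 Z3. apply med_uniq; unfold Ib.
    - rewrite (dd2 _ _ _ Z1 Z2 N12), (d_sym c1 z), (d_adj _ _ Z1), (d_adj _ _ Z2). lia.
    - rewrite (dd2 _ _ _ Z2 Z3 N23), (d_sym c2 z), (d_adj _ _ Z2), (d_adj _ _ Z3). lia.
    - rewrite (dd2 _ _ _ Z1 Z3 N13), (d_sym c1 z), (d_adj _ _ Z1), (d_adj _ _ Z3). lia. }
  apply Nab. rewrite (H a), (H b); auto; apply adj_sym; auto.
Qed.


Lemma theta_claim : forall k u v x x', adj u v -> adj x x' -> d x u = k -> d x' v = k ->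
  d x v = S k -> d x' u = S k -> forall y, d y u < d y v -> d y x < d y x'.
Proof.
  induction k as [|k IH]; intros u v x x' Huv Hxx' H1 H2 H3 H4 y Hy.
  - apply d_eq0 in H1. apply d_eq0 in H2. subst. exact Hy.
  - destruct (d_step _ _ _ H1) as [x1 [Hxx1 Hx1u]].
    pose proof (d_adj _ _ Huv) as Euv. pose proof (d_adj _ _ Hxx1) as Exx1.
    assert (Hx1v : d x1 v = S k).
    { pose proof (d_tri x x1 v). pose proof (d_tri x1 u v). lia. }
    assert (N1 : x1 <> x'). { intro E; subst. lia. }
    destruct (quad x x1 x' v (S k) Hxx1 Hxx' N1 Hx1v H2 H3) as [x1' [A1 [A2 E1]]].
    assert (Hx1'u : d x1' u = S k).
    { pose proof (d_tri x1' v u). rewrite (d_sym v u) in H. pose proof (d_tri x' x1' u).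
      rewrite (d_adj _ _ A2) in H0. lia. }
    assert (IHy := IH u v x1 x1' Huv A1 Hx1u ltac:(lia) Hx1v Hx1'u y Hy).
    destruct (classic (d y x < d y x')) as [|Hn]; auto. exfalso.
    destruct (bip _ _ y Hxx') as [F1|F1]; [|lia].
    destruct (bip _ _ y A1) as [F2|F2]; [lia|].
    destruct (bip _ _ y Hxx1) as [F3|F3];
    destruct (bip _ _ y A2) as [F4|F4]; try lia.
    assert (Ga : d y x' = d y x1) by lia.
    destruct (quad x x1 x' y (d y x1) Hxx1 Hxx' N1 ltac:(apply d_sym) ltac:(rewrite d_sym; lia)
      ltac:(rewrite d_sym; lia)) as [w [W1 [W2 W3]]].
    apply (k23 x1 x' x x1' w).
    + apply adj_sym; auto.
    + auto.
    + auto.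
    + apply adj_sym; auto.
    + auto.
    + apply adj_sym; auto.
    + intro E; subst. lia.
    + intro E; subst. rewrite d_sym in W3. lia.
    + intro E; subst. rewrite d_sym in W3. lia.
    + auto.
Qed.

Lemma thetaW u v a b : adj u v -> adj a b -> d a u < d a v -> d b v < d b u ->
  forall y, d y u < d y v <-> d y a < d y b.
Proof.
  intros Huv Hab Ha Hb.
  assert (Fa : d a v = S (d a u)) by (destruct (bip _ _ a Huv); lia).
  assert (Fb : d b u = S (d b v)) by (destruct (bip _ _ b Huv); lia).
  assert (T : d b u <= 1 + d a u).
  { pose proof (d_tri b a u). rewrite (d_sym b a), (d_adj _ _ Hab) in H. lia. }
  assert (Fab : d a v = S (d b v) \/ d b v = S (d a v)).
  { destruct (bip _ _ v Hab); rewrite (d_sym v a), (d_sym v b) in H; auto. }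
  assert (E : d b v = d a u) by lia.
  intros y; split; intros Hy.
  - apply (theta_claim (d a u) u v a b); auto; lia.
  - destruct (classic (d y u < d y v)) as [|Hn]; auto. exfalso.
    destruct (bip _ _ y Huv); [|lia].
    assert (d y b < d y a).
    { apply (theta_claim (d a u) v u b a); try apply adj_sym; auto; lia. }
    lia.
Qed.

Lemma cross u v : adj u v -> forall N x z, d x z = N -> d x u < d x v -> ~ d z u < d z v ->
  exists a b, adj a b /\ d a u < d a v /\ ~ d b u < d b v /\ d x a + S (d b z) = d x z.
Proof.
  intros Huv. induction N as [|N IH]; intros x z E Hx Hz.
  - apply d_eq0 in E; subst; contradiction.
  - destruct (d_step _ _ _ E) as [x1 [A1 E1]].
    destruct (classic (d x1 u < d x1 v)) as [H1|H1].
    + destruct (IH x1 z E1 H1 Hz) as [a [b [Ab [Ha [Hb Hs]]]]].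
      exists a, b. repeat split; auto.
      pose proof (d_tri x x1 a). rewrite (d_adj _ _ A1) in H.
      pose proof (d_tri x a z). pose proof (d_tri a b z). rewrite (d_adj _ _ Ab) in H2. lia.
    + exists x, x1. repeat split; auto. rewrite d_refl. lia.
Qed.

Lemma hs_convex u v x y z : adj u v -> d x u < d x v -> d y u < d y v -> Ib x y z -> d z u < d z v.
Proof.
  intros Huv Hx Hy Hz. destruct (classic (d z u < d z v)) as [|Hn]; auto. exfalso.
  destruct (cross u v Huv _ x z eq_refl Hx Hn) as [a [b [Ab [Ha [Hb Hs]]]]].
  assert (Hb' : d b v < d b u) by (destruct (bip _ _ b Huv); lia).
  pose proof (thetaW u v a b Huv Ab Ha Hb') as Th.
  apply Th in Hx. apply Th in Hy.
  assert (Fy : d y b = S (d y a)) by (destruct (bip _ _ y Ab); lia).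
  unfold Ib in Hz.
  pose proof (d_tri b z y). pose proof (d_tri x a y).
  rewrite (d_sym b y), (d_sym a y) in *. lia.
Qed.

Lemma least_ex (P : nat -> Prop) : (exists n, P n) -> exists m, P m /\ forall k, P k -> m <= k.
Proof.
  intros [n Hn]. revert Hn. induction n as [n IH] using (well_founded_induction lt_wf). intros Hn.
  destruct (classic (exists k, P k /\ k < n)) as [[k [Hk Hkn]]|Hno].
  - apply (IH k Hkn Hk).
  - exists n; split; auto. intros k Hk. destruct (le_lt_dec n k); auto. exfalso; eauto.
Qed.

Lemma nearest_ex (K : V -> Prop) x : (exists c, K c) -> exists p, K p /\ forall c, K c -> d x p <= d x c.
Proof.
  intros [c Hc]. destruct (least_ex (fun n => exists c, K c /\ d x c = n)) as [m [[p [Hp E]] Hm]].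
  - exists (d x c); eauto.
  - exists p; split; auto. intros c' Hc'. rewrite E. apply Hm. eauto.
Qed.

Definition convexd (K : V -> Prop) := forall a b z, K a -> K b -> Ib a b z -> K z.

Lemma gate K x p : convexd K -> K p -> (forall c, K c -> d x p <= d x c) ->
  forall c, K c -> d x c = d x p + d p c.
Proof.
  intros HK Hp Hmin c Hc.
  destruct (med_spec x p c) as [H1 [H2 H3]]. revert H1 H2 H3. generalize (med x p c). intros m H1 H2 H3.
  assert (Km : K m) by (apply (HK p c); auto).
  pose proof (Hmin m Km). unfold Ib in *.
  assert (d m p = 0) by lia. apply d_eq0 in H0. subst m. lia.
Qed.

Lemma sep_gate (K : V -> Prop) x p u v : adj u v -> (forall c, K c -> d x c = d x p + d p c) ->
  d p u < d p v -> d x v < d x u -> forall c, K c -> d c u < d c v.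
Proof.
  intros Huv G Hp Hx c Hc. destruct (classic (d c u < d c v)) as [|Hn]; auto. exfalso.
  assert (d c v < d c u) by (destruct (bip _ _ c Huv); lia).
  assert (d p v < d p u).
  { apply (hs_convex v u x c p); auto. apply adj_sym; auto. unfold Ib. rewrite (G c Hc). lia. }
  lia.
Qed.

Lemma geo : forall D p x, d p x = D -> exists z : nat -> V, z 0 = p /\
  (forall i, i < D -> adj (z i) (z (S i))) /\
  (forall i, i <= D -> d p (z i) = i /\ d (z i) x = D - i).
Proof.
  induction D as [|D IH]; intros p x E.
  - exists (fun _ => p). split; auto. split; [intros; lia|].
    intros i Hi. assert (i = 0) by lia. subst. rewrite d_refl. split; auto.
  - destruct (d_step _ _ _ E) as [p1 [A1 E1]].
    destruct (IH p1 x E1) as [z [Z0 [ZA ZD]]].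
    exists (fun i => match i with 0 => p | S i' => z i' end). split; auto. split.
    + intros [|i] Hi; [rewrite Z0; auto|]. apply ZA. lia.
    + intros [|i] Hi. { rewrite d_refl. split; lia. }
      destruct (ZD i ltac:(lia)) as [F1 F2]. split; [|lia].
      pose proof (d_tri p p1 (z i)). rewrite (d_adj _ _ A1) in H.
      pose proof (d_tri p (z i) x). lia.
Qed.

Lemma geo_dist (z : nat -> V) p x D : z 0 = p -> (forall i, i < D -> adj (z i) (z (S i))) ->
  (forall i, i <= D -> d p (z i) = i /\ d (z i) x = D - i) ->
  forall a b, a <= b -> b <= D -> d (z a) (z b) = b - a.
Proof.
  intros Z0 ZA ZD a b Hab HbD.
  assert (d (z a) (z b) <= b - a).
  { induction b as [|b IHb].
    - assert (a = 0) by lia. subst. rewrite d_refl. lia.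
    - destruct (Nat.eq_dec a (S b)) as [E|E]. { subst. rewrite d_refl. lia. }
      pose proof (IHb ltac:(lia) ltac:(lia)).
      pose proof (d_tri (z a) (z b) (z (S b))). rewrite (d_adj _ _ (ZA b ltac:(lia))) in H0. lia. }
  pose proof (d_tri p (z a) (z b)). destruct (ZD a ltac:(lia)). destruct (ZD b ltac:(lia)). lia.
Qed.

Lemma step0 (K : V -> Prop) x : convexd K -> (exists c, K c) -> ~ K x ->
  exists u v, adj u v /\ (forall y, K y -> d y u < d y v) /\ ~ d x u < d x v.
Proof.
  intros HK Hne Hx. destruct (nearest_ex K x Hne) as [p [Hp Hmin]].
  pose proof (gate K x p HK Hp Hmin) as G.
  destruct (d p x) eqn:E. { apply d_eq0 in E; subst; contradiction. }
  destruct (d_step _ _ _ E) as [z1 [A1 E1]].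
  exists p, z1. split; auto. split.
  - apply (sep_gate K x p); auto. rewrite d_refl, (d_adj _ _ A1). lia.
    rewrite (d_sym x z1), (d_sym x p). lia.
  - rewrite (d_sym x z1), (d_sym x p). lia.
Qed.

Lemma bool_flip (b1 b2 : bool) : b1 <> b2 -> (b1 = true <-> ~ b2 = true).
Proof. destruct b1, b2; intuition congruence. Qed.

Section Cube.
Variables (p x : V) (N : nat) (q : nat -> V).
Hypothesis Hq : forall j, j < N -> adj p (q j) /\ S (d (q j) x) = d p x.
Hypothesis Hinj : forall i j, i < N -> j < N -> q i = q j -> i = j.

Definition HS j y := d y (q j) < d y p.

Lemma HS_x j : j < N -> HS j x.
Proof. intros Hj. unfold HS. destruct (Hq j Hj) as [A E]. rewrite (d_sym x (q j)), (d_sym x p). lia. Qed.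
Lemma HS_p j : j < N -> ~ HS j p.
Proof. unfold HS. rewrite d_refl. lia. Qed.
Lemma HS_q j : j < N -> HS j (q j).
Proof. intros Hj. unfold HS. rewrite d_refl, d_sym, (d_adj _ _ (proj1 (Hq j Hj))). lia. Qed.
Lemma notHS j y : j < N -> ~ HS j y -> d y p < d y (q j).
Proof.
  intros Hj Hn. unfold HS in Hn. destruct (bip (q j) p y (adj_sym _ _ (proj1 (Hq j Hj)))); lia.
Qed.

Lemma nodouble_core i j s t : i < N -> j < N -> adj s t -> ~ HS i s -> HS i t ->
  (HS j s <-> ~ HS j t) -> i = j.
Proof.
  intros Hi Hj Ast Ns Ht Hjst.
  pose proof (thetaW (q i) p t s (adj_sym _ _ (proj1 (Hq i Hi))) (adj_sym _ _ Ast) Ht (notHS i s Hi Ns)) as Thi.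
  destruct (classic (HS j t)) as [Hjt|Hjt].
  - assert (Njs : ~ HS j s) by tauto.
    pose proof (thetaW (q j) p t s (adj_sym _ _ (proj1 (Hq j Hj))) (adj_sym _ _ Ast) Hjt (notHS j s Hj Njs)) as Thj.
    pose proof (HS_q i Hi) as Hqi. unfold HS in Hqi. apply Thi in Hqi. apply Thj in Hqi.
    rewrite (d_sym (q i) p), (d_adj _ _ (proj1 (Hq i Hi))) in Hqi.
    apply Hinj; auto. apply d_eq0. lia.
  - assert (Hjs : HS j s) by tauto.
    pose proof (thetaW (q j) p s t (adj_sym _ _ (proj1 (Hq j Hj))) Ast Hjs (notHS j t Hj Hjt)) as Thj.
    pose proof (HS_p i Hi) as P1. pose proof (HS_p j Hj) as P2. unfold HS in P1, P2.
    rewrite Thi in P1. rewrite Thj in P2.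
    destruct (bip s t p Ast); lia.
Qed.

Lemma nodouble i j s t : i < N -> j < N -> adj s t -> (HS i s <-> ~ HS i t) ->
  (HS j s <-> ~ HS j t) -> i = j.
Proof.
  intros Hi Hj Ast Hi' Hj'.
  destruct (classic (HS i t)) as [Ht|Ht].
  - apply (nodouble_core i j s t); auto; tauto.
  - apply (nodouble_core i j t s); auto; try (apply adj_sym; auto); try tauto.
    all: destruct (classic (HS j s)); destruct (classic (HS j t)); tauto.
Qed.

Definition g k y := med y (q k) x.
Definition G0 k y := adj y (g k y) /\ HS k (g k y) /\ Ib p x (g k y) /\ d p (g k y) = S (d p y).

Lemma gstep k y0 y : k < N -> adj y0 y -> Ib p x y0 -> Ib p x y -> ~ HS k y0 -> ~ HS k y ->
  d p y = S (d p y0) -> G0 k y0 -> G0 k y /\ adj (g k y0) (g k y).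
Proof.
  intros Hk A I0 I1 N0 N1 E [A0 [H0 [J0 E0]]].
  revert A0 H0 J0 E0. generalize (g k y0). intros g0 A0 H0 J0 E0.
  unfold Ib in I0, I1, J0.
  assert (Ne : y <> g0). { intro F; subst. contradiction. }
  destruct (quad y0 y g0 x (d y x) A A0 Ne eq_refl ltac:(lia) ltac:(lia)) as [w [W1 [W2 W3]]].
  assert (Dpw : d p w = S (S (d p y0))).
  { pose proof (d_tri p g0 w). rewrite (d_adj _ _ W2) in H. pose proof (d_tri p w x). lia. }
  assert (Hw : HS k w).
  { unfold HS. apply (hs_convex (q k) p g0 x w); auto.
    apply adj_sym, (proj1 (Hq k Hk)). apply (HS_x k Hk). unfold Ib. rewrite (d_adj _ _ W2). lia. }
  assert (Dwq : d w (q k) = S (d p y0)).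
  { unfold HS in Hw. rewrite (d_sym w p) in Hw.
    destruct (bip (q k) p w (adj_sym _ _ (proj1 (Hq k Hk)))); rewrite (d_sym w p) in *; lia. }
  assert (Dyq : d y (q k) = S (S (d p y0))).
  { pose proof (notHS k y Hk N1). destruct (bip (q k) p y (adj_sym _ _ (proj1 (Hq k Hk))));
    rewrite (d_sym y p) in *; lia. }
  pose proof (proj2 (Hq k Hk)) as Dqx.
  assert (Ew : w = g k y).
  { unfold g. apply med_uniq; unfold Ib.
    - rewrite (d_adj _ _ W1). lia.
    - rewrite (d_sym (q k) w). lia.
    - rewrite (d_adj _ _ W1). lia. }
  split; [|rewrite <- Ew; auto]. unfold G0. rewrite <- Ew.
  split; auto. split; auto. split; [unfold Ib; lia| lia].
Qed.

Lemma g0_all k : k < N -> forall l y, d p y = l -> Ib p x y -> ~ HS k y -> G0 k y.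
Proof.
  intros Hk. induction l as [|l IH]; intros y E Iy Ny.
  - apply d_eq0 in E. subst y.
    pose proof (Hq k Hk) as [A Dq]. pose proof (d_adj _ _ A) as Dpq.
    assert (Eq : g k p = q k).
    { symmetry. unfold g. apply med_uniq; unfold Ib; rewrite ?d_refl; lia. }
    unfold G0. rewrite Eq. split; auto. split; [apply HS_q; auto|]. unfold Ib. rewrite d_refl. lia.
  - rewrite d_sym in E. destruct (d_step _ _ _ E) as [y0 [A E0]].
    unfold Ib in Iy.
    assert (I0 : Ib p x y0).
    { unfold Ib. pose proof (d_tri y0 y x). rewrite (d_sym y0 y), (d_adj _ _ A) in H.
      pose proof (d_tri p y0 x). rewrite (d_sym y p) in E. rewrite (d_sym y0 p) in E0. lia. }
    assert (N0 : ~ HS k y0).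
    { unfold HS. pose proof (proj1 (Hq k Hk)) as Apq.
      assert (d y0 p < d y0 (q k)).
      { apply (hs_convex p (q k) p y y0); auto. rewrite d_refl, (d_adj _ _ Apq). lia.
        apply notHS; auto. unfold Ib. rewrite (d_sym y0 y), (d_adj _ _ A). rewrite (d_sym y p) in E.
        rewrite (d_sym y0 p) in E0. lia. }
      lia. }
    assert (G := IH y0 ltac:(rewrite d_sym; auto) I0 N0).
    apply (gstep k y0 y); auto. apply adj_sym; auto.
    rewrite (d_sym y p) in E. rewrite (d_sym y0 p) in E0. lia.
Qed.

Lemma g0_of k y : k < N -> Ib p x y -> ~ HS k y -> G0 k y.
Proof. intros. apply (g0_all k H (d p y) y eq_refl); auto. Qed.

Fixpoint cf (k : nat) (a : nat -> bool) : V :=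
  match k with 0 => p | S k' => if a k' then g k' (cf k' a) else cf k' a end.
Fixpoint cnt (k : nat) (a : nat -> bool) : nat :=
  match k with 0 => 0 | S k' => (if a k' then 1 else 0) + cnt k' a end.

Lemma cf_ext k a b : (forall j, j < k -> a j = b j) -> cf k a = cf k b.
Proof.
  induction k; intros H; simpl; auto. rewrite (H k) by lia. rewrite IHk by (intros; apply H; lia). reflexivity.
Qed.
Lemma cnt_ext k a b : (forall j, j < k -> a j = b j) -> cnt k a = cnt k b.
Proof.
  induction k; intros H; simpl; auto. rewrite (H k) by lia. rewrite IHk by (intros; apply H; lia). reflexivity.
Qed.
Lemma cnt_flip k a b j : j < k -> a j = false -> b j = true ->
  (forall i, i < k -> i <> j -> a i = b i) -> cnt k b = S (cnt k a).
Proof.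
  induction k; intros Hj Ha Hb H; [lia|]. simpl.
  destruct (Nat.eq_dec j k) as [E|E].
  - subst. rewrite Ha, Hb. rewrite (cnt_ext k a b) by (intros; apply H; lia). lia.
  - rewrite (H k) by lia. rewrite IHk by (first [lia | assumption | intros; apply H; lia]). destruct (b k); lia.
Qed.

Definition Inv k :=
  (forall a, Ib p x (cf k a) /\ d p (cf k a) = cnt k a) /\
  (forall a j, j < k -> (HS j (cf k a) <-> a j = true)) /\
  (forall a b j, j < k -> a j = false -> b j = true -> (forall i, i < k -> i <> j -> a i = b i) ->
     adj (cf k a) (cf k b)) /\
  (forall a m, k <= m -> m < N -> ~ HS m (cf k a)).

Lemma inv_all : forall k, k <= N -> Inv k.
Proof.
  induction k as [|k IH]; intros Hk.
  - split; [|split; [|split]]; simpl.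
    + intros a. unfold Ib. rewrite d_refl. split; lia.
    + intros; lia.
    + intros; lia.
    + intros a m _ Hm. apply HS_p; auto.
  - destruct (IH ltac:(lia)) as [I1 [I2 [I3 I4]]].
    assert (Hk' : k < N) by lia.
    assert (Gy : forall a, G0 k (cf k a)).
    { intros a. apply g0_of; [exact Hk' | apply I1 | apply I4; lia]. }
    split; [|split; [|split]].
    + intros a. simpl. destruct (a k) eqn:Ea.
      * destruct (Gy a) as [_ [_ [J E]]]. split; auto. rewrite E, (proj2 (I1 a)). lia.
      * simpl. apply I1.
    + intros a j Hj. simpl. destruct (Nat.eq_dec j k) as [E|E].
      * subst j. destruct (a k) eqn:Ea.
        -- split; auto. intros _. apply (Gy a).
        -- split; intro F; [exfalso; apply (I4 a k); auto | discriminate].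
      * destruct (a k) eqn:Ea; [|apply I2; lia].
        rewrite <- (I2 a j) by lia.
        destruct (Gy a) as [Ag [Hg _]].
        assert (Nk : ~ HS k (cf k a)) by (apply I4; lia).
        destruct (classic (HS j (cf k a))); destruct (classic (HS j (g k (cf k a)))); try tauto;
        exfalso; apply E; symmetry; apply (nodouble k j (cf k a) (g k (cf k a))); auto; try lia; tauto.
    + intros a b j Hj Ha Hb Hab. simpl. destruct (Nat.eq_dec j k) as [E|E].
      * subst j. rewrite Ha, Hb. rewrite (cf_ext k a b) by (intros; apply Hab; lia). apply (Gy b).
      * rewrite (Hab k) by lia. destruct (b k) eqn:Ebk.
        -- apply (gstep k (cf k a) (cf k b)); auto.
           all: first [ apply (I3 a b j); auto; try lia; intros; apply Hab; lia
                      | apply I1 | apply I4; lia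
                      | rewrite (proj2 (I1 a)), (proj2 (I1 b)); apply (cnt_flip k a b j); auto; try lia;
                        intros; apply Hab; lia ].
        -- apply (I3 a b j); auto; try lia; intros; apply Hab; lia.
    + intros a m Hm HmN. simpl. destruct (a k) eqn:Ea.
      * intro Hg. destruct (Gy a) as [Ag [Hgk _]].
        assert (Nk : ~ HS k (cf k a)) by (apply I4; lia).
        assert (Nm : ~ HS m (cf k a)) by (apply I4; lia).
        assert (k = m) by (apply (nodouble k m (cf k a) (g k (cf k a))); auto; tauto). lia.
      * apply I4; lia.
Qed.

Lemma cube_ok : is_cube adj N (cf N).
Proof.
  destruct (inv_all N (le_n N)) as [I1 [I2 [I3 I4]]].
  split; [|split].
  - intros a b H. apply cf_ext. auto.
  - intros a b E i Hi. pose proof (I2 a i Hi) as F1. pose proof (I2 b i Hi) as F2. rewrite E in F1.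
    destruct (a i), (b i); auto.
    + assert (false = true) by (apply F2, F1; reflexivity). discriminate.
    + assert (false = true) by (apply F1, F2; reflexivity). discriminate.
  - intros a b. split.
    + intros Hadj. destruct (classic (exists i, i < N /\ a i <> b i)) as [[i [Hi Ne]]|Hno].
      * exists i. split; auto. split; auto. intros j Hj Hji.
        destruct (classic (a j = b j)) as [|Nj]; auto. exfalso. apply Hji. symmetry.
        pose proof (I2 a i Hi). pose proof (I2 b i Hi). pose proof (bool_flip _ _ Ne).
        pose proof (I2 a j Hj). pose proof (I2 b j Hj). pose proof (bool_flip _ _ Nj).
        apply (nodouble i j (cf N a) (cf N b)); auto; tauto.
      * exfalso. assert (cf N a = cf N b).
        { apply cf_ext; intros j Hj; destruct (classic (a j = b j)); auto. exfalso; apply Hno; eauto. }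
        rewrite H in Hadj. apply (adj_irr _ Hadj).
    + intros [i [Hi [Ne Hoth]]]. destruct (a i) eqn:Ea.
      * assert (b i = false) by (destruct (b i); congruence).
        apply adj_sym. apply (I3 b a i); auto. intros; symmetry; auto.
      * assert (b i = true) by (destruct (b i); congruence).
        apply (I3 a b i); auto.
Qed.

End Cube.

Lemma q_props (K : V -> Prop) x p u v y : convexd K -> K p -> (forall c, K c -> d x c = d x p + d p c) ->
  adj u v -> d x u < d x v -> d p v < d p u -> (exists c, K c /\ d c y <= 1) -> d y u < d y v ->
  adj p (med x y p) /\ d (med x y p) u < d (med x y p) v /\ S (d (med x y p) x) = d p x.
Proof.
  intros HK Hp G Huv Hxu Hpv [c [Hc Hcy]] Hyu.
  pose proof (sep_gate K x p v u (adj_sym _ _ Huv) G Hpv Hxu) as KS.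
  assert (Ny : ~ K y) by (intro Ky; pose proof (KS y Ky); lia).
  assert (Ecy : d c y = 1).
  { destruct (d c y) eqn:E; [|lia]. apply d_eq0 in E. subst. contradiction. }
  assert (Near : forall c', K c' -> d y c <= d y c').
  { intros c' Hc'. rewrite (d_sym y c), Ecy. destruct (d y c') eqn:E; [|lia].
    apply d_eq0 in E. subst. contradiction. }
  pose proof (gate K y c HK Hc Near p Hp) as Gy.
  destruct (med_spec x y p) as [H1 [H2 H3]]. revert H1 H2 H3. generalize (med x y p). intros m H1 H2 H3.
  assert (Fm : d m u < d m v) by (apply (hs_convex u v x y m); auto).
  unfold Ib in *.
  pose proof (G c Hc) as Gc. pose proof (d_tri x m c). pose proof (d_tri m y c).
  rewrite (d_sym y c) in Gy. rewrite (d_sym m y), (d_sym y c), (d_sym p c) in *.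
  assert (Dmp : d m p = 1).
  { destruct (d m p) eqn:E; [|lia]. apply d_eq0 in E. subst. lia. }
  split; [apply d1_adj; rewrite d_sym; auto|]. split; auto. rewrite (d_sym m x), (d_sym p x). lia.
Qed.

Lemma stepL n : cube_dim adj n -> forall (K : V -> Prop) x, convexd K -> (exists c, K c) ->
  (forall c, K c -> n < d c x) ->
  exists u v, adj u v /\ (forall y, (exists c, K c /\ d c y <= 1) -> d y u < d y v) /\ ~ d x u < d x v.
Proof.
  intros [_ Hdim] K x HK Hne Hfar.
  destruct (nearest_ex K x Hne) as [p [Hp Hmin]].
  pose proof (gate K x p HK Hp Hmin) as G.
  pose proof (Hfar p Hp) as Hnp.
  destruct (geo (d p x) p x eq_refl) as [z [Z0 [ZA ZD]]].
  destruct (classic (exists i, i <= n /\ forall y, (exists c, K c /\ d c y <= 1) -> d y (z i) < d y (z (S i))))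
    as [[i [Hi Hgood]]|Hbad].
  - exists (z i), (z (S i)). split; [apply ZA; lia|]. split; auto.
    destruct (ZD i ltac:(lia)). destruct (ZD (S i) ltac:(lia)).
    rewrite (d_sym x (z i)), (d_sym x (z (S i))). lia.
  - assert (Hb : forall i, exists y, i <= n -> (exists c, K c /\ d c y <= 1) /\ d y (z (S i)) < d y (z i)).
    { intros i. destruct (le_lt_dec i n) as [Hi|Hi]; [|exists x; intros; lia].
      destruct (classic (exists y, (exists c, K c /\ d c y <= 1) /\ ~ d y (z i) < d y (z (S i))))
        as [[y [Hy1 Hy2]]|Hno].
      - exists y. intros _. split; auto. destruct (bip (z i) (z (S i)) y (ZA i ltac:(lia))); lia.
      - exfalso. apply Hbad. exists i. split; auto. intros y Hy. apply NNPP. intro. apply Hno; eauto. }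
    set (yf := fun i => proj1_sig (constructive_indefinite_description _ (Hb i))).
    assert (Hyf : forall i, i <= n -> (exists c, K c /\ d c (yf i) <= 1) /\ d (yf i) (z (S i)) < d (yf i) (z i)).
    { intros i Hi. unfold yf. destruct (constructive_indefinite_description _ (Hb i)); simpl; auto. }
    set (qf := fun i => med x (yf i) p).
    assert (Hqp : forall i, i <= n -> adj p (qf i) /\ d (qf i) (z (S i)) < d (qf i) (z i) /\ S (d (qf i) x) = d p x).
    { intros i Hi. destruct (Hyf i Hi) as [Y1 Y2]. unfold qf.
      destruct (ZD i ltac:(lia)). destruct (ZD (S i) ltac:(lia)).
      apply (q_props K x p (z (S i)) (z i) (yf i)); auto.
      - apply adj_sym, ZA; lia.
      - rewrite (d_sym x (z i)), (d_sym x (z (S i))). lia.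
      - lia. }
    assert (Hlt : forall i j, i < j -> j <= n -> qf i = qf j -> False).
    { intros i j Hij Hj E.
      destruct (Hqp i ltac:(lia)) as [Ai [Fi _]]. destruct (Hqp j Hj) as [Aj [Fj _]].
      destruct (ZD i ltac:(lia)) as [Pi _]. destruct (ZD (S i) ltac:(lia)) as [Psi _].
      destruct (ZD j ltac:(lia)) as [Pj _]. destruct (ZD (S j) ltac:(lia)) as [Psj _].
      pose proof (thetaW (z (S i)) (z i) (qf i) p (adj_sym _ _ (ZA i ltac:(lia))) (adj_sym _ _ Ai) Fi
        ltac:(lia)) as Thi.
      pose proof (thetaW (z (S j)) (z j) (qf j) p (adj_sym _ _ (ZA j ltac:(lia))) (adj_sym _ _ Aj) Fj
        ltac:(lia)) as Thj.
      assert (L : d (z (S i)) (z (S i)) < d (z (S i)) (z i)).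
      { rewrite d_refl, d_sym, (d_adj _ _ (ZA i ltac:(lia))). lia. }
      apply Thi in L. rewrite E in L. apply Thj in L.
      rewrite (geo_dist z p x (d p x) Z0 ZA ZD (S i) (S j)) in L by lia.
      rewrite (geo_dist z p x (d p x) Z0 ZA ZD (S i) j) in L by lia. lia. }
    assert (Hc := cube_ok p x (S n) qf
      ltac:(intros j Hj; destruct (Hqp j ltac:(lia)) as [A [_ E]]; auto)
      ltac:(intros i j Hi Hj E; destruct (lt_eq_lt_dec i j) as [[L|L]|L]; auto;
            [exfalso; apply (Hlt i j); auto; lia | exfalso; apply (Hlt j i); auto; lia])).
    apply Hdim in Hc. lia.
Qed.

Lemma nbhd_iff m (C : V -> Prop) y : nbhd adj m C y <-> exists c, C c /\ d c y <= m.
Proof.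
  split.
  - intros [c [Hc [k [Hk W]]]]. exists c; split; auto. pose proof (d_min _ _ _ W). lia.
  - intros [c [Hc H]]. exists c; split; auto. exists (d c y); split; auto. apply d_walk.
Qed.

Lemma hs_of u v : adj u v -> halfspace adj (fun y => d y u < d y v).
Proof.
  intros A. exists u, v; split; auto. intros y; split.
  - intros H. exists (d y u), (d y v). split; [apply d_spec|split; [apply d_spec|auto]].
  - intros [a [b [Ha [Hb L]]]]. apply is_dist_d in Ha. apply is_dist_d in Hb. subst; auto.
Qed.

Lemma hs_iff (H : V -> Prop) : halfspace adj H -> exists u v, adj u v /\ forall y, H y <-> d y u < d y v.
Proof.
  intros [u [v [A Hiff]]]. exists u, v; split; auto. intros y. rewrite Hiff. split.
  - intros [a [b [Ha [Hb L]]]]. apply is_dist_d in Ha. apply is_dist_d in Hb. subst; auto.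
  - intros L. exists (d y u), (d y v). split; [apply d_spec|split; [apply d_spec|auto]].
Qed.

Lemma hull_convexd (S : V -> Prop) : convexd (comb_hull adj S).
Proof.
  intros a b z Ha Hb Iz H HH Hsub. destruct (hs_iff H HH) as [u [v [A Hiff]]].
  apply Hiff. apply (hs_convex u v a b z A); auto; apply Hiff; [apply Ha | apply Hb]; auto.
Qed.

Lemma convex_d (C : V -> Prop) : convex adj C -> convexd C.
Proof. intros Hc a b z Ha Hb I. apply (Hc a b z); auto. apply int_iff; auto. Qed.

Lemma main n (C : V -> Prop) : cube_dim adj n -> (exists c, C c) -> convex adj C ->
  forall r x, comb_hull adj (nbhd adj r C) x -> nbhd adj (n * r) C x.
Proof.
  intros Hdim [c0 Hc0] Hconv. pose proof (convex_d C Hconv) as HC.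
  induction r as [|r IH]; intros x Hx; apply NNPP; intros Hn; rewrite nbhd_iff in Hn.
  - assert (Nx : ~ C x) by (intro Cx; apply Hn; exists x; split; auto; rewrite d_refl; lia).
    destruct (step0 C x HC (ex_intro _ c0 Hc0) Nx) as [u [v [A [Hall Hxn]]]].
    apply Hxn. apply (Hx _ (hs_of u v A)). intros y Hy. rewrite nbhd_iff in Hy.
    destruct Hy as [c [Hc Hcy]]. assert (d c y = 0) by lia. apply d_eq0 in H. subst. auto.
  - set (K := comb_hull adj (nbhd adj r C)).
    assert (InK : forall y, nbhd adj r C y -> K y) by (intros y Hy H _ Hsub; apply Hsub; auto).
    assert (Hfar : forall k, K k -> n < d k x).
    { intros k Hk. destruct (proj1 (nbhd_iff _ _ _) (IH k Hk)) as [c [Hc Hck]].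
      pose proof (d_tri c k x). rewrite Nat.mul_succ_r in Hn.
      destruct (le_lt_dec (d c x) (n * r + n)) as [L|L]; [exfalso; apply Hn; eauto|]. lia. }
    assert (Kne : exists c, K c).
    { exists c0. apply InK. rewrite nbhd_iff. exists c0. split; auto. rewrite d_refl. lia. }
    destruct (stepL n Hdim K x (hull_convexd _) Kne Hfar) as [u [v [A [Hall Hxn]]]].
    apply Hxn. apply (Hx _ (hs_of u v A)). intros y Hy. rewrite nbhd_iff in Hy.
    destruct Hy as [c [Hc Hcy]]. apply Hall.
    destruct (d c y) eqn:E.
    + apply d_eq0 in E. subst. exists y. split; [|rewrite d_refl; lia].
      apply InK. rewrite nbhd_iff. exists y. split; auto. rewrite d_refl. lia.
    + rewrite d_sym in E. destruct (d_step _ _ _ E) as [y' [A' E']].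
      exists y'. split.
      * apply InK. rewrite nbhd_iff. exists c. split; auto. rewrite d_sym. lia.
      * rewrite (d_sym y' y), (d_adj _ _ A'). lia.
Qed.

End MG.

Theorem lemma3p8 (V : Type) (adj : V -> V -> Prop) (n : nat) (C : V -> Prop) (r : nat) :
  median_graph adj -> cube_dim adj n ->
  (exists c, C c) -> convex adj C ->
  forall x, comb_hull adj (nbhd adj r C) x -> nbhd adj (n * r) C x.
Proof.
  intros HM Hd Hne Hc. exact (main V adj HM n C Hd Hne Hc r).
Qed.
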